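(* Let $r\in[0,\tfrac12]$. For every family of projective measurements $\{M_{a|x}\}_{a,x}$ on Alice's qubit, the assemblage generated from the Werner state $\omega_r$ by this family admits an LHS model of size $N(r)$ (whenever $N(r)<\infty$). Moreover, $\gamma(\omega_r)\ge N(r)$.
   Context: Notation: $\vec\sigma=(\sigma_x,\sigma_y,\sigma_z)$ is the vector of Pauli matrices, $\mathbb{I}$ the identity. A qubit POVM is a finite family $\{\Pi_i\}_{i=1}^n$ of positive semidefinite $2\times2$ operators summing to $\mathbb{I}$ (an ''$n$-outcome POVM''). A POVM $\{\Pi_i\}_{i=1}^n$ simulates a family of POVMs $\{M_{a|x}\}_{a,x}$ if there exist numbers $p(a|x,i)\ge0$ with $\sum_a p(a|x,i)=1$ such that $M_{a|x}=\sum_{i=1}^n p(a|x,i)\Pi_i$ for all $a,x$. For $r\in[0,1]$, $\mathcal{P}_r$ is the family of all two-outcome POVMs $\{M_{+|r\hat n},M_{-|r\hat n}\}$, $M_{\pm|r\hat n}=\tfrac12(\mathbb{I}\pm r\,\hat n\cdot\vec\sigma)$, over all unit vectors $\hat n\in\mathbb{R}^3$. $N(r)$ is the smallest $n$ such that some $n$-outcome qubit POVM simulates $\mathcal{P}_r$ ($N(r)=+\infty$ if none exists). The two-qubit Werner state is $\omega_r=r|\Psi^-\rangle\langle\Psi^-|+(1-r)\mathbb{I}\otimes\mathbb{I}/4$ with $|\Psi^-\rangle=(|01\rangle-|10\rangle)/\sqrt2$. Given a bipartite state $\rho_{AB}$ and a family of POVMs $\{M_{a|x}\}$ on $A$ (arbitrary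 input set, finitely many outcomes each), the generated assemblage is $\sigma_{a|x}=\mathrm{Tr}_A[(M_{a|x}\otimes\mathbb{I})\rho_{AB}]$. An LHS model of size $n$ for it consists of a probability distribution $p(i)$ on $\{1,\dots,n\}$, states $\rho_i$ on $B$, and conditional probabilities $p(a|x,i)$ with $\sigma_{a|x}=\sum_{i=1}^n p(a|x,i)p(i)\rho_i$ for all $a,x$. $\gamma(\rho_{AB})\in\{1,2,\dots\}\cup\{+\infty\}$ is the smallest $n$ such that every assemblage generated from $\rho_{AB}$ by any family of POVMs on $A$ admits an LHS model of size $n$. *)

(* Defs.v *)
From HB Require Import structures.
From mathcomp Require Import all_boot all_order all_algebra.
From mathcomp Require Import boolp reals.
From mathcomp Require Import complex mxtens.
Set Implicit Arguments. Unset Strict Implicit. Unset Printing Implicit Defensive.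
Import Order.TTheory GRing.Theory Num.Theory.
Local Open Scope ring_scope.

Section QDefs.
Variable R : realType.
Local Notation C := (R[i]).
Local Open Scope complex_scope.

Definition adjmx {m n} (A : 'M[C]_(m, n)) : 'M[C]_(n, m) := (map_mx conjc A)^T.

(* positive semidefinite: <v, A v> >= 0 for every v (order of C: real and >= 0) *)
Definition psd {n} (A : 'M[C]_n) : Prop :=
  forall v : 'cV[C]_n, 0 <= (adjmx v *m A *m v) 0 0.

Definition is_state {n} (rho : 'M[C]_n) : Prop := psd rho /\ \tr rho = 1.

Definition is_povm {k} (M : 'I_k -> 'M[C]_2) : Prop :=
  (forall a, psd (M a)) /\ \sum_(a < k) M a = 1%:M.

Definition is_projective {k} (M : 'I_k -> 'M[C]_2) : Prop :=
  is_povm M /\ (forall a, adjmx (M a) = M a /\ M a *m M a = M a).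

Definition povm_family (X : Type) (k : X -> nat) :=
  forall x : X, 'I_(k x) -> 'M[C]_2.

Definition simulates n (Pi : 'I_n -> 'M[C]_2) (X : Type) (k : X -> nat)
  (M : povm_family k) : Prop :=
  exists p : forall x : X, 'I_(k x) -> 'I_n -> R,
    (forall x a i, 0 <= p x a i) /\
    (forall x i, \sum_(a < k x) p x a i = 1) /\
    (forall x a, M x a = \sum_(i < n) (p x a i)%:C *: Pi i).

Definition sigx : 'M[C]_2 := \matrix_(i, j) (if i == j then 0 else 1).
Definition sigy : 'M[C]_2 :=
  \matrix_(i, j) (if i == j then 0 else if (i : nat) == 0%N then - 'i else 'i).
Definition sigz : 'M[C]_2 :=
  \matrix_(i, j) (if i == j then (if (i : nat) == 0%N then 1 else -1) else 0).

Definition unit_vec := {v : 'rV[R]_3 | \sum_(j < 3) v 0 j ^+ 2 == 1}.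

Definition ndotsigma (v : 'rV[R]_3) : 'M[C]_2 :=
  (v 0 0)%:C *: sigx + (v 0 1)%:C *: sigy + (v 0 2)%:C *: sigz.

(* the family P_r: outcome 0 is "+", outcome 1 is "-" *)
Definition Pr_family (r : R) : povm_family (fun _ : unit_vec => 2%N) :=
  fun v a => (2%:R)^-1 *: (1%:M + (if a == ord0 then 1 else -1) *:
                                   ((r%:C) *: ndotsigma (val v))).

Definition simulable (r : R) (n : nat) : Prop :=
  exists Pi : 'I_n -> 'M[C]_2, is_povm Pi /\ simulates Pi (Pr_family r).

(* smallest n satisfying P, or None (= +oo) if there is none *)
Definition min_opt (P : nat -> Prop) : option nat :=
  match pselect (exists n, `[< P n >]) with
  | left h => Some (ex_minn h)
  | right _ => None
  end.

Definition ole (a b : option nat) : Prop :=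
  match a, b with
  | _, None => True
  | None, Some _ => False
  | Some m, Some n => (m <= n)%N
  end.

Definition Nr (r : R) : option nat := min_opt (simulable r).

(* two-qubit systems: index of |a b> is mxtens_index (a, b) *)
Definition ket (b : 'I_2) : 'cV[C]_2 := delta_mx b 0.
Definition psi_minus : 'cV[C]_(2 * 2) :=
  ((Num.sqrt (2 : R))^-1)%:C *: (ket 0 *t ket 1 - ket 1 *t ket 0).
Definition werner (r : R) : 'M[C]_(2 * 2) :=
  r%:C *: (psi_minus *m adjmx psi_minus) + ((1 - r) / 4)%:C *: 1%:M.

(* partial trace over Alice (first factor) *)
Definition ptraceA (X : 'M[C]_(2 * 2)) : 'M[C]_2 :=
  \matrix_(b, b') \sum_(a < 2) X (mxtens_index (a, b)) (mxtens_index (a, b')).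

Definition assemblage (rho : 'M[C]_(2 * 2)) (X : Type) (k : X -> nat)
  (M : povm_family k) : forall x : X, 'I_(k x) -> 'M[C]_2 :=
  fun x a => ptraceA ((M x a *t (1%:M : 'M[C]_2)) *m rho).

Definition has_LHS_model (X : Type) (k : X -> nat)
  (sigma : forall x : X, 'I_(k x) -> 'M[C]_2) (n : nat) : Prop :=
  exists (p : 'I_n -> R) (rhos : 'I_n -> 'M[C]_2)
         (q : forall x : X, 'I_(k x) -> 'I_n -> R),
    (forall i, 0 <= p i) /\ \sum_(i < n) p i = 1 /\
    (forall i, is_state (rhos i)) /\
    (forall x a i, 0 <= q x a i) /\
    (forall x i, \sum_(a < k x) q x a i = 1) /\
    (forall x a, sigma x a = \sum_(i < n) (q x a i * p i)%:C *: rhos i).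

Definition all_LHS (rho : 'M[C]_(2 * 2)) (n : nat) : Prop :=
  forall (X : Type) (k : X -> nat) (M : povm_family k),
    (forall x, is_povm (M x)) -> has_LHS_model (assemblage rho M) n.

Definition gamma (rho : 'M[C]_(2 * 2)) : option nat := min_opt (all_LHS rho).

End QDefs.

(* Main.v *)
Require Import Defs.
From HB Require Import structures.
From mathcomp Require Import all_boot all_order all_algebra.
From mathcomp Require Import boolp reals.
From mathcomp Require Import complex mxtens.
From mathcomp Require Import ring lra.
Import Order.TTheory GRing.Theory Num.Theory.
Set Implicit Arguments. Unset Strict Implicit. Unset Printing Implicit Defensive.
Local Open Scope ring_scope.
Local Open Scope complex_scope.
Section S.
Variable R : realType.
Local Notation C := R[i].

Lemma ord2 (i : 'I_2) : i = 0 \/ i = 1.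
Proof. by case: i => [[|[|]]] //= ?; [left|right]; apply/val_inj. Qed.

Lemma sum2 (V : nmodType) (F : 'I_2 -> V) : \sum_(i < 2) F i = F 0 + F 1.
Proof. by rewrite !big_ord_recr big_ord0 /= add0r; congr (F _ + F _); apply/val_inj. Qed.

Lemma sum4 (F : 'I_(2*2) -> C) : \sum_(k < 2*2) F k = \sum_(c < 2) \sum_(d < 2) F (mxtens_index (c,d)).
Proof.
rewrite pair_big /=.
rewrite (reindex (@mxtens_unindex 2 2)) /=.
  by apply: eq_bigr => k _; rewrite mxtens_unindexK.
by exists (@mxtens_index 2 2) => k _; rewrite (mxtens_indexK, mxtens_unindexK).
Qed.

Definition s2 : R := (Num.sqrt (2 : R))^-1.
Lemma s2s2 : s2 * s2 = 2^-1.
Proof. by rewrite /s2 -invfM -expr2 sqr_sqrtr ?ler0n. Qed.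

Definition psiR (a b : 'I_2) : R :=
  s2 * ((a == 0)%:R * (b == 1)%:R - (a == 1)%:R * (b == 0)%:R).
Definition psi a b : C := (psiR a b)%:C.

Lemma psiE a b (z : 'I_(1*1)) : psi_minus R (mxtens_index (a, b)) z = psi a b.
Proof.
rewrite /psi_minus mxE.
have -> : z = mxtens_index (0 : 'I_1, 0 : 'I_1) by apply/val_inj; case: z => [[]].
rewrite !mxE !mxtens_indexK /psi /psiR /=.
case: (ord2 a) => ->; case: (ord2 b) => -> /=; rewrite /s2; by simpc.
Qed.

Lemma wernerE (r : R) a b c d :
  werner r (mxtens_index (a, b)) (mxtens_index (c, d)) =
  r%:C * (psi a b * psi c d) + ((1 - r) / 4)%:C * ((a == c) && (b == d))%:R.
Proof.
rewrite /werner /adjmx; have hP := psiE; move: (psi_minus R) hP => P hP.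
rewrite !mxE big_ord1 !mxE !hP /psi conjc_real (inj_eq (can_inj (@mxtens_indexK 2 2))) xpair_eqE.
by rewrite -[((1 - r) / 4)%:C]mulr1 -mulrA mulr_natr.
Qed.

Definition sgn (a b : 'I_2) : C := ((a == 0)%:R * (b == 1)%:R - (a == 1)%:R * (b == 0)%:R).
Lemma psi_sgn a b : psi a b = s2%:C * sgn a b.
Proof. by rewrite /psi /psiR rmorphM rmorphB !rmorphM !rmorph_nat. Qed.
Lemma s2C : s2%:C * s2%:C = 2^-1 :> C.
Proof. by rewrite -rmorphM s2s2 rmorphV ?unitfE ?pnatr_eq0 //= rmorph_nat. Qed.

Lemma wernerE2 (r : R) a b c d :
  werner r (mxtens_index (a, b)) (mxtens_index (c, d)) =
  r%:C * (2^-1 * (sgn a b * sgn c d)) + ((1 - r) / 4)%:C * ((a == c) && (b == d))%:R.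
Proof. by rewrite wernerE !psi_sgn mulrACA s2C. Qed.

Definition mk2 (a b c d : C) : 'M[C]_2 :=
  \matrix_(i, j) if i == 0 then (if j == 0 then a else b) else (if j == 0 then c else d).

Definition asm (r : R) (E : 'M[C]_2) : 'M[C]_2 := ptraceA (E *t 1%:M *m werner r).

Lemma asmE (r : R) (E : 'M[C]_2) :
  asm r E = mk2 ((r/2)%:C * E 1 1 + ((1-r)/4)%:C * (E 0 0 + E 1 1)) (- (r/2)%:C * E 0 1)
                (- (r/2)%:C * E 1 0) ((r/2)%:C * E 0 0 + ((1-r)/4)%:C * (E 0 0 + E 1 1)).
Proof.
apply/matrixP => i j; rewrite /asm /ptraceA /mk2 !mxE.
under eq_bigr do rewrite mxE sum4.
under eq_bigr do under eq_bigr do under eq_bigr do rewrite tensmxE wernerE2 mxE.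
rewrite !sum2.
case: (ord2 i) => ->; case: (ord2 j) => -> /=; rewrite /sgn /=.
all: rewrite !rmorphM /= !rmorphV ?unitfE ?pnatr_eq0 //= !rmorph_nat; ring.
Qed.

Lemma mk2E00 a b c d : mk2 a b c d 0 0 = a. Proof. by rewrite mxE. Qed.
Lemma mk2E01 a b c d : mk2 a b c d 0 1 = b. Proof. by rewrite mxE. Qed.
Lemma mk2E10 a b c d : mk2 a b c d 1 0 = c. Proof. by rewrite mxE. Qed.
Lemma mk2E11 a b c d : mk2 a b c d 1 1 = d. Proof. by rewrite mxE. Qed.
Definition mk2E := (mk2E00, mk2E01, mk2E10, mk2E11).

Lemma mk2_eta (A : 'M[C]_2) : A = mk2 (A 0 0) (A 0 1) (A 1 0) (A 1 1).
Proof. by apply/matrixP => i j; rewrite mxE; case: (ord2 i) => ->; case: (ord2 j) => ->. Qed.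

Lemma mk2P a b c d a' b' c' d' : mk2 a b c d = mk2 a' b' c' d' ->
  [/\ a = a', b = b', c = c' & d = d'].
Proof. move=> h; split.
- by move: (congr1 (fun A : 'M[C]_2 => A 0 0) h); rewrite /= !mk2E.
- by move: (congr1 (fun A : 'M[C]_2 => A 0 1) h); rewrite /= !mk2E.
- by move: (congr1 (fun A : 'M[C]_2 => A 1 0) h); rewrite /= !mk2E.
- by move: (congr1 (fun A : 'M[C]_2 => A 1 1) h); rewrite /= !mk2E.
Qed.

Lemma mk2_eq a b c d a' b' c' d' : a = a' -> b = b' -> c = c' -> d = d' ->
  mk2 a b c d = mk2 a' b' c' d'.
Proof. by move=> -> -> -> ->. Qed.

Lemma mk2_add a b c d a' b' c' d' : mk2 a b c d + mk2 a' b' c' d' = mk2 (a+a') (b+b') (c+c') (d+d').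
Proof. by apply/matrixP => i j; rewrite !mxE; case: (i == 0); case: (j == 0). Qed.

Lemma mk2_scale (x : C) a b c d : x *: mk2 a b c d = mk2 (x*a) (x*b) (x*c) (x*d).
Proof. by apply/matrixP => i j; rewrite !mxE; case: (i == 0); case: (j == 0). Qed.

Lemma mk2_1 : 1%:M = mk2 1 0 0 1 :> 'M[C]_2.
Proof. by apply/matrixP => i j; rewrite !mxE; case: (ord2 i) => ->; case: (ord2 j) => ->. Qed.

Lemma mk2_mul a b c d a' b' c' d' : mk2 a b c d *m mk2 a' b' c' d' =
  mk2 (a*a' + b*c') (a*b' + b*d') (c*a' + d*c') (c*b' + d*d').
Proof. apply/matrixP => i j; rewrite !mxE sum2 !mxE /=.
by case: (ord2 i) => ->; case: (ord2 j) => ->. Qed.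

Lemma mk2_adj a b c d : adjmx (mk2 a b c d) = mk2 a^* c^* b^* d^*.
Proof. apply/matrixP => i j; rewrite !mxE.
by case: (ord2 i) => ->; case: (ord2 j) => ->. Qed.

Definition col2 (x y : C) : 'cV[C]_2 := \col_i (if i == 0 then x else y).
Lemma col2_eta (v : 'cV[C]_2) : v = col2 (v 0 0) (v 1 0).
Proof. apply/matrixP => i j; rewrite !mxE; have -> : j = 0 by apply/val_inj; case: j => [[]].
by case: (ord2 i) => ->. Qed.

Lemma form2 x y a b c d :
  (adjmx (col2 x y) *m mk2 a b c d *m col2 x y) 0 0 = x^* * (a * x + b * y) + y^* * (c * x + d * y).
Proof. rewrite !mxE sum2 !mxE !sum2 !mxE /=. ring. Qed.


Lemma cplxP (x y : C) : complex.Re x = complex.Re y -> complex.Im x = complex.Im y -> x = y.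
Proof. by case: x => ? ?; case: y => ? ? /= -> ->. Qed.

Definition hm (a d b1 b2 : R) : 'M[C]_2 := mk2 a%:C (b1 +i* b2) (b1 -i* b2) d%:C.

Lemma hm_add a d b1 b2 a' d' b1' b2' :
  hm a d b1 b2 + hm a' d' b1' b2' = hm (a + a') (d + d') (b1 + b1') (b2 + b2').
Proof. rewrite /hm mk2_add; apply: mk2_eq; apply: cplxP => /=; ring. Qed.

Lemma hm_scale (x a d b1 b2 : R) :
  x%:C *: hm a d b1 b2 = hm (x * a) (x * d) (x * b1) (x * b2).
Proof. rewrite /hm mk2_scale; apply: mk2_eq; apply: cplxP => /=; ring. Qed.

Lemma hm_inj a d b1 b2 a' d' b1' b2' : hm a d b1 b2 = hm a' d' b1' b2' ->
  [/\ a = a', d = d', b1 = b1' & b2 = b2'].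
Proof. by case/mk2P => [[->] [-> ->] _ [->]]. Qed.

Lemma hm_1 : 1%:M = hm 1 1 0 0.
Proof. rewrite mk2_1 /hm; apply: mk2_eq; apply: cplxP => /=; ring. Qed.

Lemma hm_sum (I : Type) (s : seq I) (P : pred I) (F : I -> R * R * R * R) :
  \sum_(i <- s | P i) hm (F i).1.1.1 (F i).1.1.2 (F i).1.2 (F i).2 =
  hm (\sum_(i <- s | P i) (F i).1.1.1) (\sum_(i <- s | P i) (F i).1.1.2)
     (\sum_(i <- s | P i) (F i).1.2) (\sum_(i <- s | P i) (F i).2).
Proof.
elim: s => [|x s IH].
  rewrite !big_nil /hm; apply/matrixP => i j; rewrite !mxE.
  by case: (i == 0); case: (j == 0); apply: cplxP; rewrite /= ?oppr0.
by rewrite !big_cons; case: (P x); rewrite // IH hm_add.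
Qed.

Lemma ndotsigma_hm (v : 'rV[R]_3) : ndotsigma v = hm (v 0 2) (- v 0 2) (v 0 0) (- v 0 1).
Proof.
apply/matrixP => i j; rewrite /ndotsigma /hm !mxE.
case: (ord2 i) => ->; case: (ord2 j) => -> /=; apply: cplxP => /=; ring.
Qed.

Lemma asm_hm (r a d b1 b2 : R) : asm r (hm a d b1 b2) =
  hm (r/2 * d + (1-r)/4 * (a+d)) (r/2 * a + (1-r)/4 * (a+d)) (-(r/2) * b1) (-(r/2) * b2).
Proof. rewrite asmE /hm !mk2E; apply: mk2_eq; apply: cplxP => /=; ring. Qed.

Lemma herm_hm (E : 'M[C]_2) : adjmx E = E ->
  E = hm (complex.Re (E 0 0)) (complex.Re (E 1 1)) (complex.Re (E 0 1)) (complex.Im (E 0 1)).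
Proof.
move=> h.
have h' : mk2 (E 0 0)^* (E 1 0)^* (E 0 1)^* (E 1 1)^* = mk2 (E 0 0) (E 0 1) (E 1 0) (E 1 1).
  by rewrite -mk2_adj -(mk2_eta E).
have [h00 h01 h10 h11] := mk2P h'.
rewrite {1}(mk2_eta E) /hm; apply: mk2_eq.
- move: h00; case: (E 0 0) => a b /(congr1 (@complex.Im _)) /= hb.
  by apply: cplxP => //=; lra.
- by case: (E 0 1).
- by rewrite -h10; case: (E 0 1).
- move: h11; case: (E 1 1) => a b /(congr1 (@complex.Im _)) /= hb.
  by apply: cplxP => //=; lra.
Qed.

Lemma hm_proj a d b1 b2 : hm a d b1 b2 *m hm a d b1 b2 = hm a d b1 b2 ->
  [/\ a ^+ 2 + b1 ^+ 2 + b2 ^+ 2 = a, (a + d) * b1 = b1, (a + d) * b2 = b2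
   & d ^+ 2 + b1 ^+ 2 + b2 ^+ 2 = d].
Proof.
rewrite /hm mk2_mul => /mk2P [/(congr1 (@complex.Re R)) /= h1 /(congr1 (@complex.Re R)) /= h2
  /(congr1 (@complex.Im R)) /= h3 /(congr1 (@complex.Re R)) /= h4]; split; nra.
Qed.


Lemma conjc_i : ('i : C)^* = - 'i.
Proof. by apply: cplxP; rewrite /= ?oppr0. Qed.

Lemma ge0_anti (w : C) : 0 <= w -> 0 <= - w -> w = 0.
Proof. by move=> h1; rewrite oppr_ge0 => h2; apply/le_anti; rewrite h1 h2. Qed.

Lemma psd_form (A : 'M[C]_2) x y : psd A ->
  0 <= x^* * (A 0 0 * x + A 0 1 * y) + y^* * (A 1 0 * x + A 1 1 * y).
Proof. by move=> h; have := h (col2 x y); rewrite {1}(mk2_eta A) form2. Qed.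

Lemma psd_form' (A : 'M[C]_2) x y xc yc : psd A -> x^* = xc -> y^* = yc ->
  0 <= xc * (A 0 0 * x + A 0 1 * y) + yc * (A 1 0 * x + A 1 1 * y).
Proof. by move=> h <- <-; exact: psd_form. Qed.

Lemma ge0_eq (x y : C) : 0 <= x -> x = y -> 0 <= y. Proof. by move=> h <-. Qed.

Lemma iform1 (I a b : C) : 1 * (0 * 1 + a * I) + - I * (b * 1 + 0 * I) = I * (a - b).
Proof. ring. Qed.
Lemma iform2 (I a b : C) : 1 * (0 * 1 + a * - I) + I * (b * 1 + 0 * - I) = - (I * (a - b)).
Proof. ring. Qed.

Ltac cj := by apply: cplxP; rewrite /= ?oppr0 ?opprK.

Lemma psd_diag (A : 'M[C]_2) : psd A -> 0 <= A 0 0 /\ 0 <= A 1 1.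
Proof.
move=> h; split.
  apply: ge0_eq (psd_form' (x := 1) (y := 0) (xc := 1) (yc := 0) h ltac:(cj) ltac:(cj) ) _; ring.
apply: ge0_eq (psd_form' (x := 0) (y := 1) (xc := 0) (yc := 1) h ltac:(cj) ltac:(cj) ) _; ring.
Qed.

Lemma psd_zero (A : 'M[C]_2) : psd A -> A 0 0 = 0 -> A 1 1 = 0 -> A = 0.
Proof.
move=> h h0 h1.
have e1 : A 0 1 + A 1 0 = 0.
  apply: ge0_anti.
    apply: ge0_eq (psd_form' (x := 1) (y := 1) (xc := 1) (yc := 1) h ltac:(cj) ltac:(cj) ) _; rewrite h0 h1; ring.
  apply: ge0_eq (psd_form' (x := 1) (y := -1) (xc := 1) (yc := -1) h ltac:(cj) ltac:(cj) ) _; rewrite h0 h1; ring.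
have e2 : 'i * (A 0 1 - A 1 0) = 0.
  apply: ge0_anti.
    apply: ge0_eq (psd_form' (x := 1) (y := 'i) (xc := 1) (yc := -'i) h ltac:(cj) ltac:(cj) ) _; rewrite h0 h1; exact: iform1.
  apply: ge0_eq (psd_form' (x := 1) (y := -'i) (xc := 1) (yc := 'i) h ltac:(cj) ltac:(cj) ) _; rewrite h0 h1; exact: iform2.
have ni : ('i : C) != 0 by apply/eqP => /(congr1 (@complex.Im _)) /=; apply/eqP; rewrite oner_eq0.
move/eqP: e2; rewrite mulf_eq0 (negbTE ni) /= subr_eq0 => /eqP e2.
have e3 : A 0 1 = 0.
  by apply: (@mulIf _ 2); rewrite ?pnatr_eq0 // mul0r mulr2n mulrDr mulr1 {2}e2.
rewrite (mk2_eta A) h0 h1 e3; move: e1; rewrite e3 add0r => ->.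
by apply/matrixP => i j; rewrite !mxE; case: (i == 0); case: (j == 0).
Qed.

Lemma psd_scale (x : R) (A : 'M[C]_2) : 0 <= x -> psd A -> psd (x%:C *: A).
Proof.
move=> hx h v; rewrite -scalemxAr -scalemxAl mxE.
by apply: mulr_ge0; [rewrite ler0c | exact: h].
Qed.

Lemma psd_hm a d b1 b2 : 0 <= a -> 0 <= d -> a * d = b1 ^+ 2 + b2 ^+ 2 -> psd (hm a d b1 b2).
Proof.
move=> ha hd hb v; rewrite (col2_eta v) /hm form2.
case: (v 0 0) => x1 x2; case: (v 1 0) => y1 y2.
rewrite lecE /=; apply/andP; split; first by apply/eqP; ring.
have s1 := sqr_ge0 (a * x1 + b1 * y1 - b2 * y2).
have s2 := sqr_ge0 (a * x2 + b1 * y2 + b2 * y1).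
have he : (a * d - b1 ^+ 2 - b2 ^+ 2) * (y1 ^+ 2 + y2 ^+ 2) = 0 by rewrite hb; ring.
have [a0|apos] := eqVneq a 0.
  have hb1 : b1 = 0 by move: hb; rewrite a0 mul0r; nra.
  have hb2 : b2 = 0 by move: hb; rewrite a0 mul0r; nra.
  rewrite a0 hb1 hb2; nra.
have apos' : 0 < a by rewrite lt_neqAle eq_sym apos ha.
nra.
Qed.

Lemma sum3 (F : 'I_3 -> R) : \sum_(i < 3) F i = F 0 + F 1 + F 2.
Proof.
rewrite !big_ord_recr big_ord0 /= add0r.
by congr (F _ + F _ + F _); apply/val_inj.
Qed.

Lemma unitE (v : unit_vec R) : (val v) 0 0 ^+ 2 + (val v) 0 1 ^+ 2 + (val v) 0 2 ^+ 2 = 1.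
Proof. by have /eqP := valP v; rewrite sum3. Qed.

Definition row3 (x y z : R) : 'rV[R]_3 :=
  \row_j (if j == 0 then x else if j == 1 then y else z).

Lemma mkuv_proof (x y z : R) : x ^+ 2 + y ^+ 2 + z ^+ 2 = 1 ->
  \sum_(j < 3) (row3 x y z) 0 j ^+ 2 == 1.
Proof. by move=> h; rewrite sum3 !mxE /= h. Qed.

Definition mkuv x y z h : unit_vec R := exist _ (row3 x y z) (@mkuv_proof x y z h).

Lemma mkuvE x y z h : [/\ val (@mkuv x y z h) 0 0 = x, val (@mkuv x y z h) 0 1 = y
  & val (@mkuv x y z h) 0 2 = z].
Proof. by rewrite /= !mxE. Qed.

Lemma Pr_hm (r : R) (v : unit_vec R) (a : 'I_2) :
  let s : R := if a == ord0 then 1 else -1 in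
  @Pr_family R r v a = hm ((1 + s * r * val v 0 2) / 2) ((1 - s * r * val v 0 2) / 2)
                       (s * r * val v 0 0 / 2) (- (s * r * val v 0 1) / 2).
Proof.
move=> s; rewrite /Pr_family ndotsigma_hm hm_1.
have -> : (if a == ord0 then 1 else -1) = s%:C :> C.
  by rewrite /s; case: (a == ord0); rewrite ?rmorphN rmorph1.
have -> : (2%:R^-1 : C) = (2^-1)%:C by rewrite rmorphV ?unitfE ?pnatr_eq0 //= rmorph_nat.
rewrite !hm_scale hm_add hm_scale; congr hm; ring.
Qed.


Definition cA (E : 'M[C]_2) := complex.Re (E 0 0).
Definition cD (E : 'M[C]_2) := complex.Re (E 1 1).
Definition cB1 (E : 'M[C]_2) := complex.Re (E 0 1).
Definition cB2 (E : 'M[C]_2) := complex.Im (E 0 1).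

Lemma hmE (E : 'M[C]_2) : adjmx E = E -> E = hm (cA E) (cD E) (cB1 E) (cB2 E).
Proof. exact: herm_hm. Qed.

Lemma proj_coords (E : 'M[C]_2) : adjmx E = E -> E *m E = E ->
  [/\ cA E ^+ 2 + cB1 E ^+ 2 + cB2 E ^+ 2 = cA E, (cA E + cD E) * cB1 E = cB1 E,
      (cA E + cD E) * cB2 E = cB2 E & cD E ^+ 2 + cB1 E ^+ 2 + cB2 E ^+ 2 = cD E].
Proof. by move=> h1 h2; apply: hm_proj; rewrite -(hmE h1). Qed.

Lemma rank1 (a d b1 b2 : R) :
  a ^+ 2 + b1 ^+ 2 + b2 ^+ 2 = a -> (a + d) * b1 = b1 -> (a + d) * b2 = b2 ->
  d ^+ 2 + b1 ^+ 2 + b2 ^+ 2 = d ->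
  ~~ ((b1 == 0) && (b2 == 0) && (a == d)) -> a + d = 1.
Proof.
move=> h1 h2 h3 h4.
have [b10|b1n] := eqVneq b1 0; last first.
  by move=> _; apply: (mulIf b1n); rewrite h2 mul1r.
have [b20|b2n] := eqVneq b2 0; last first.
  by move=> _; apply: (mulIf b2n); rewrite h3 mul1r.
rewrite /= => had.
have ha : a * (a - 1) = 0 by move: h1; rewrite b10 b20; nra.
have hd : d * (d - 1) = 0 by move: h4; rewrite b10 b20; nra.
move/eqP: ha; rewrite mulf_eq0 subr_eq0 => /orP [] /eqP ha;
move/eqP: hd; rewrite mulf_eq0 subr_eq0 => /orP [] /eqP hd;
move: had; rewrite ha hd ?eqxx //= => _; lra.
Qed.

Definition good (v : unit_vec R) (E : 'M[C]_2) : Prop :=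
  exists e0 c : R, E = e0%:C *: 1%:M + c%:C *: ndotsigma (val v) /\ 0 <= e0 /\
    (c = 0 \/ (e0 = 1/2 /\ (c = 1/2 \/ c = -1/2))).

Lemma goodI (v : unit_vec R) E (e0 c : R) :
  E = hm (e0 + c * val v 0 2) (e0 - c * val v 0 2) (c * val v 0 0) (- (c * val v 0 1)) ->
  E = e0%:C *: 1%:M + c%:C *: ndotsigma (val v).
Proof. move=> ->; rewrite hm_1 ndotsigma_hm !hm_scale hm_add; congr hm; ring. Qed.

Lemma good_scalar v E : adjmx E = E -> E *m E = E ->
  (cB1 E == 0) && (cB2 E == 0) && (cA E == cD E) -> good v E.
Proof.
move=> h1 h2 /andP [/andP [/eqP e1 /eqP e2] /eqP e3].
have [p1 _ _ _] := proj_coords h1 h2.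
exists (cA E), 0; split; last split.
- by apply: goodI; rewrite {1}(hmE h1) e1 e2 -e3; congr hm; ring.
- by move: p1; rewrite e1 e2; nra.
- by left.
Qed.

Lemma sum_rest (k : nat) (f : 'I_k -> R) (K : R) (a a0 : 'I_k) :
  a != a0 -> \sum_b f b = K -> (forall b, b != a0 -> b != a -> f b = 0) -> f a = K - f a0.
Proof.
move=> ne hs hz; rewrite -hs (bigD1 a0) //= (bigD1 a) //=.
rewrite big1 ?addr0; first by ring.
by move=> b /andP [h1 h2]; apply: hz.
Qed.

Lemma SL (k : nat) (M : 'I_k -> 'M[C]_2) : is_projective M ->
  exists v : unit_vec R, forall a, good v (M a).
Proof.
move=> [[_ hsum] hp].
have hh a := (hp a).1. have hq a := (hp a).2.
have [/existsP [a0 na0]|hall] := boolP [exists a, ~~ ((cB1 (M a) == 0) && (cB2 (M a) == 0) && (cA (M a) == cD (M a)))]; last first.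
  have ez : (0 : R) ^+ 2 + 0 ^+ 2 + 1 ^+ 2 = 1 by ring.
  exists (mkuv ez) => a; apply: good_scalar => //.
  by move: hall; rewrite negb_exists => /forallP /(_ a); rewrite negbK.
have [p1 p2 p3 p4] := proj_coords (hh a0) (hq a0).
have r1 := rank1 p1 p2 p3 p4 na0.
have nv : (2 * cB1 (M a0)) ^+ 2 + (- (2 * cB2 (M a0))) ^+ 2 + (cA (M a0) - cD (M a0)) ^+ 2 = 1.
  have -> : cD (M a0) = 1 - cA (M a0) by lra.
  nra.
exists (mkuv nv) => a.
have [e1 e2 e3] := mkuvE nv.
have [sc|nsc] := boolP ((cB1 (M a) == 0) && (cB2 (M a) == 0) && (cA (M a) == cD (M a))).
  exact: good_scalar.
have [->|ne] := eqVneq a a0.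
  exists (1/2), (1/2); split; last split.
  - apply: goodI; rewrite e1 e2 e3 {1}(hmE (hh a0)); congr hm; lra.
  - lra.
  - by right; split; [|left].
have [q1 q2 q3 q4] := proj_coords (hh a) (hq a).
have r2 := rank1 q1 q2 q3 q4 nsc.
have hs : \sum_(b < k) hm (cA (M b)) (cD (M b)) (cB1 (M b)) (cB2 (M b)) = hm 1 1 0 0.
  rewrite -hm_1 -hsum; apply: eq_bigr => b _; exact/esym/hmE.
rewrite (@hm_sum _ _ _ (fun b => (cA (M b), cD (M b), cB1 (M b), cB2 (M b)))) /= in hs.
have [sA sD sB1 sB2] := hm_inj hs.
have tnn b : 0 <= cA (M b) + cD (M b).
  have [u1 _ _ u4] := proj_coords (hh b) (hq b); nra.
have st : \sum_b (cA (M b) + cD (M b)) = 2 by rewrite big_split /= sA sD.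
have zt b : b != a0 -> b != a -> cA (M b) + cD (M b) = 0.
  move=> nb0 nb.
  move: st; rewrite (bigD1 a0) //= (bigD1 a) //= => st.
  have hr : \sum_(i < k | (i != a0) && (i != a)) (cA (M i) + cD (M i)) = 0 by lra.
  by apply: (psumr_eq0P _ hr); [move=> i _; exact: tnn | rewrite nb0 nb].
have z4 b : b != a0 -> b != a -> [/\ cA (M b) = 0, cD (M b) = 0, cB1 (M b) = 0 & cB2 (M b) = 0].
  move=> nb0 nb; have := zt b nb0 nb.
  have [u1 _ _ u4] := proj_coords (hh b) (hq b) => ht.
  have ha : cA (M b) = 0 by nra.
  have hd : cD (M b) = 0 by nra.
  by split => //; nra.
have fA : cA (M a) = 1 - cA (M a0).
  by apply: (sum_rest ne sA) => b h1 h2; case: (z4 b h1 h2).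
have fD : cD (M a) = 1 - cD (M a0).
  by apply: (sum_rest ne sD) => b h1 h2; case: (z4 b h1 h2).
have fB1 : cB1 (M a) = 0 - cB1 (M a0).
  by apply: (sum_rest ne sB1) => b h1 h2; case: (z4 b h1 h2).
have fB2 : cB2 (M a) = 0 - cB2 (M a0).
  by apply: (sum_rest ne sB2) => b h1 h2; case: (z4 b h1 h2).
exists (1/2), (-(1/2)); split; last split.
- apply: goodI; rewrite e1 e2 e3 {1}(hmE (hh a)) fA fD fB1 fB2; congr hm; lra.
- lra.
- by right; split; [|right; lra].
Qed.


Lemma sum2R (F : 'I_2 -> R) : \sum_(i < 2) F i = F 0 + F 1.
Proof. by rewrite !big_ord_recr big_ord0 /= add0r; congr (F _ + F _); apply/val_inj. Qed.

Lemma ReD (x y : C) : complex.Re (x + y) = complex.Re x + complex.Re y.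
Proof. by case: x; case: y. Qed.

Lemma Re_sum (I : Type) (s : seq I) (P : pred I) (F : I -> C) :
  complex.Re (\sum_(i <- s | P i) F i) = \sum_(i <- s | P i) complex.Re (F i).
Proof. by elim/big_rec2: _ => // i y1 y2 _ <-; rewrite ReD. Qed.

Lemma lin_hm (v : unit_vec R) (e0 c : R) :
  e0%:C *: 1%:M + c%:C *: ndotsigma (val v) =
  hm (e0 + c * val v 0 2) (e0 - c * val v 0 2) (c * val v 0 0) (- (c * val v 0 1)).
Proof. by apply/esym/goodI. Qed.

Lemma tr2 (A : 'M[C]_2) : \tr A = A 0 0 + A 1 1.
Proof. by rewrite /mxtrace sum2. Qed.

Lemma psd_real (A : 'M[C]_2) : psd A ->
  A 0 0 = (cA A)%:C /\ A 1 1 = (cD A)%:C /\ 0 <= cA A /\ 0 <= cD A.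
Proof.
case/psd_diag; rewrite /cA /cD; case: (A 0 0) => a1 a2; case: (A 1 1) => d1 d2.
rewrite !lecE /= => /andP [/eqP h1 h2] /andP [/eqP h3 h4].
by do !split => //; apply: cplxP.
Qed.

Lemma Pr_hm1 (r : R) (v : unit_vec R) : @Pr_family R r v 1 =
  hm ((1 - r * val v 0 2) / 2) ((1 + r * val v 0 2) / 2) (- (r * val v 0 0) / 2) (r * val v 0 1 / 2).
Proof. rewrite Pr_hm; have -> : ((1 : 'I_2) == ord0) = false by []. congr hm; ring. Qed.

Lemma Pr_hm0 (r : R) (v : unit_vec R) : @Pr_family R r v 0 =
  hm ((1 + r * val v 0 2) / 2) ((1 - r * val v 0 2) / 2) (r * val v 0 0 / 2) (- (r * val v 0 1) / 2).
Proof. rewrite Pr_hm; have -> : ((0 : 'I_2) == ord0) = true by []. congr hm; ring. Qed.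

Lemma part1 (r : R) (n : nat) : simulable r n ->
  forall (X : Type) (k : X -> nat) (M : povm_family R k),
    (forall x, is_projective (M x)) -> has_LHS_model (assemblage (werner r) M) n.
Proof.
move=> [Pi [[hpsd hsumPi] [p [p0 [p1 pE]]]]] X k M hM.
have hv x : exists v, forall a, good v (M x a) := SL (hM x).
have /choice [vf hvf] := hv.
pose E0 x a := sval (cid (hvf x a)).
have hE0 x a : exists c, M x a = (E0 x a)%:C *: 1%:M + c%:C *: ndotsigma (val (vf x)) /\ 0 <= E0 x a /\
    (c = 0 \/ (E0 x a = 1/2 /\ (c = 1/2 \/ c = -1/2))) := svalP (cid (hvf x a)).
pose Cf x a := sval (cid (hE0 x a)).
have hC x a : M x a = (E0 x a)%:C *: 1%:M + (Cf x a)%:C *: ndotsigma (val (vf x)) /\ 0 <= E0 x a /\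
    (Cf x a = 0 \/ (E0 x a = 1/2 /\ (Cf x a = 1/2 \/ Cf x a = -1/2))) := svalP (cid (hE0 x a)).
pose pr i := (cA (Pi i) + cD (Pi i)) / 2.
pose rho i := if pr i == 0 then hm 1 0 0 0 else ((2 * pr i)^-1)%:C *: Pi i.
pose q x a i := E0 x a - Cf x a + 2 * Cf x a * p (vf x) 1 i.
have hpr i : 0 <= pr i by have [_ [_ [h1 h2]]] := psd_real (hpsd i); rewrite /pr; lra.
have ple x i : p x 1 i <= 1.
  by have := p1 x i; rewrite sum2R => h; have := p0 x 0 i; lra.
exists pr, rho, q; split; [exact: hpr|split; [|split; [|split; [|split]]]].
-
  have h0 : \sum_i complex.Re (Pi i 0 0) = 1.
    by rewrite -Re_sum -summxE hsumPi mxE.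
  have h1 : \sum_i complex.Re (Pi i 1 1) = 1.
    by rewrite -Re_sum -summxE hsumPi mxE.
  rewrite /pr -mulr_suml big_split /= /cA /cD h0 h1; lra.
-
  move=> i; rewrite /rho; case: eqP => hp.
    split; first by apply: psd_hm; rewrite ?ler01 ?lexx //; ring.
    rewrite tr2 /hm !mk2E; apply: cplxP => /=; ring.
  have [e00 [e11 _]] := psd_real (hpsd i).
  split; first by apply: psd_scale => //; rewrite invr_ge0; have := hpr i; lra.
  rewrite tr2 !mxE e00 e11 -mulrDr -rmorphD -rmorphM /=.
  have -> : cA (Pi i) + cD (Pi i) = 2 * pr i by rewrite /pr; field.
  have hne : 2 * pr i != 0 by apply: mulf_neq0; [rewrite pnatr_eq0 | apply/eqP].
  by rewrite mulVf // rmorph1.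
-
  move=> x a i; rewrite /q; have [_ [he [c0|[e12 [c1|c1]]]]] := hC x a.
  + by rewrite c0; lra.
  + by rewrite e12 c1; have := p0 (vf x) 1 i; lra.
  + by rewrite e12 c1; have := ple (vf x) i; lra.
-
  move=> x i.
  have hs : \sum_(a < k x) M x a = hm 1 1 0 0 by rewrite -hm_1; case: (hM x) => [[_ ->]].
  have hs' : \sum_(a < k x) hm (E0 x a + Cf x a * val (vf x) 0 2) (E0 x a - Cf x a * val (vf x) 0 2)
     (Cf x a * val (vf x) 0 0) (- (Cf x a * val (vf x) 0 1)) = hm 1 1 0 0.
    by rewrite -hs; apply: eq_bigr => a _; rewrite (hC x a).1 lin_hm.
  rewrite (@hm_sum _ _ _ (fun a => (E0 x a + Cf x a * val (vf x) 0 2, E0 x a - Cf x a * val (vf x) 0 2,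
     Cf x a * val (vf x) 0 0, - (Cf x a * val (vf x) 0 1)))) /= in hs'.
  have [s1 s2 s3 s4] := hm_inj hs'.
  rewrite ?sumrB ?sumrN !big_split /= -!mulr_suml in s1 s2 s3 s4.
  have u := unitE (vf x); rewrite /= in u.
  set S := \sum_(a < k x) E0 x a in s1 s2 s3 s4 *.
  set T := \sum_(a < k x) Cf x a in s1 s2 s3 s4 *.
  have hT : T = 0 by nra.
  have hS : S = 1 by nra.
  rewrite /q !big_split /= sumrN -!mulr_suml -mulr_sumr -/S -/T hS hT; ring.
-
  move=> x a.
  have term i : (q x a i * pr i)%:C *: rho i = (q x a i / 2)%:C *: Pi i.
    rewrite /rho; case: eqP => hp.
      have [e00 [e11 [g0 g1]]] := psd_real (hpsd i).
      have hA : cA (Pi i) = 0 by move: hp; rewrite /pr; lra.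
      have hD : cD (Pi i) = 0 by move: hp; rewrite /pr; lra.
      have -> : Pi i = 0 by apply: psd_zero; rewrite ?e00 ?e11 ?hA ?hD.
      by rewrite hp mulr0 scale0r scaler0.
    rewrite scalerA -rmorphM; congr (_%:C *: _); field.
    by apply/eqP.
  under eq_bigr do rewrite term.
  rewrite (eq_bigr (fun i => ((E0 x a - Cf x a)/2)%:C *: Pi i + (Cf x a)%:C *: ((p (vf x) 1 i)%:C *: Pi i))); last first.
    by move=> i _; rewrite scalerA -rmorphM -scalerDl -rmorphD /q; congr (_%:C *: _); field.
  rewrite big_split /= -!scaler_sumr hsumPi -pE.
  have -> : assemblage (werner r) M a = asm r (M x a) by [].
  rewrite (hC x a).1 lin_hm asm_hm Pr_hm1 hm_1 !hm_scale hm_add; congr hm; move: (E0 x a) (Cf x a) (\val (vf x) 0 0) (\val (vf x) 0 1) (\val (vf x) 0 2) => A B V0 V1 V2; by field.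
Qed.

Lemma Pr1_povm (v : unit_vec R) : is_povm (@Pr_family R 1 v).
Proof.
have u := unitE v.
split.
  move=> a; case: (ord2 a) => ->; [rewrite Pr_hm0|rewrite Pr_hm1]; apply: psd_hm; nra.
change (\sum_(a < 2) @Pr_family R 1 v a = 1%:M); rewrite sum2 Pr_hm0 Pr_hm1 hm_add hm_1; congr hm; by field.
Qed.

Definition flipo (a : 'I_2) : 'I_2 := if a == ord0 then 1 else 0.

Lemma part2 (r : R) (m : nat) : all_LHS (werner r) m -> simulable r m.
Proof.
move=> h.
have := h (unit_vec R) (fun _ => 2%N) (Pr_family 1) Pr1_povm.
case=> p0 [rho [q [hp [hsp [hst [hq [hsq heq]]]]]]].
pose Pi i := (2 * p0 i)%:C *: rho i.
have ez : (0 : R) ^+ 2 + 0 ^+ 2 + 1 ^+ 2 = 1 by ring.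
pose v0 := mkuv ez.
have hasm v b : assemblage (werner r) (Pr_family 1) (x := v) b = asm r (@Pr_family R 1 v b) by [].
have key : \sum_i (p0 i)%:C *: rho i = hm (2^-1) (2^-1) 0 0.
  have e : \sum_(b < 2) asm r (@Pr_family R 1 v0 b) =
           \sum_(b < 2) \sum_i (q v0 b i * p0 i)%:C *: rho i.
    by apply: eq_bigr => b _; rewrite -heq.
  rewrite exchange_big /= in e.
  have e2 : \sum_(b < 2) asm r (@Pr_family R 1 v0 b) = hm (2^-1) (2^-1) 0 0.
    rewrite sum2 Pr_hm0 Pr_hm1 !asm_hm hm_add; congr hm; by field.
  rewrite -e2 e; apply: eq_bigr => i _.
  by rewrite -scaler_suml -rmorph_sum -mulr_suml hsq mul1r.
have t v b i : (q v b i)%:C *: Pi i = 2%:C *: ((q v b i * p0 i)%:C *: rho i).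
  by rewrite /Pi !scalerA -!rmorphM; congr (_%:C *: _); ring.
exists Pi; split.
  split.
    move=> i; apply: psd_scale; first by have := hp i; lra.
    by case: (hst i).
  have -> : \sum_(i < m) Pi i = 2%:C *: \sum_i (p0 i)%:C *: rho i.
    by rewrite scaler_sumr; apply: eq_bigr => i _; rewrite /Pi scalerA -rmorphM.
  by rewrite key hm_scale hm_1; congr hm; field.
exists (fun v a i => q v (flipo a) i); split; [|split].
- by move=> v a i; apply: hq.
- move=> v i; rewrite sum2R /flipo /=.
  have := hsq v i; rewrite sum2R => <-.
  by rewrite addrC.
- move=> v a.
  under eq_bigr do rewrite t.
  rewrite -scaler_sumr -heq hasm.
  case: (ord2 a) => ->; rewrite /flipo.
    have -> : ((0 : 'I_2) == ord0) = true by [].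
    rewrite Pr_hm0 Pr_hm1 asm_hm hm_scale; congr hm; by field.
  have -> : ((1 : 'I_2) == ord0) = false by [].
  rewrite Pr_hm0 Pr_hm1 asm_hm hm_scale; congr hm; by field.
Qed.

End S.

Unset Implicit Arguments.
Local Close Scope complex_scope.

Theorem proposition1 (R : realType) (r : R) :
  0 <= r <= 2^-1 ->
  (forall n : nat, Nr r = Some n ->
     forall (X : Type) (k : X -> nat) (M : povm_family R k),
       (forall x, is_projective (M x)) ->
       has_LHS_model (assemblage (werner r) M) n)
  /\ ole (Nr r) (gamma (werner r)).
Proof.
move=> _; split.
- move=> n; rewrite /Nr /min_opt; case: pselect => // hx [<-].
  case: ex_minnP => m /asboolP hm _; exact: part1.
- rewrite /ole; case E: (gamma (werner r)) => [m|]; last by case: (Nr r).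
  move: E; rewrite /gamma /min_opt; case: pselect => // hx [<-].
  case: ex_minnP => m0 /asboolP hm _.
  have hs := part2 hm.
  rewrite /Nr /min_opt; case: pselect => [hy|hn].
    by case: ex_minnP => n' _ hmin; apply: hmin; apply/asboolP.
  by exfalso; apply: hn; exists m0; apply/asboolP.
Qed.
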